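(* Let $\phi\in C^4(\mathbb{R})$ be a profile function of a graph-like forward self-similar solution to the planar surface diffusion flow, i.e. $$\frac{\phi(x_1) - x_1\phi'(x_1)}{4\,v(x_1)} = -\frac{1}{v}\frac{d}{dx_1}\Big(\frac{1}{v}\frac{dk}{dx_1}\Big)\quad\text{on }\mathbb{R},\qquad v=\sqrt{1+(\phi')^2},\ k=\phi''/v^3.$$ Assume $\phi$ is globally Lipschitz and $\phi' - a_0\in L^1(\mathbb{R})$ for some $a_0\in\mathbb{R}$. Then $\phi(x_1) = a_0 x_1$ for all $x_1\in\mathbb{R}$.
   Context: The displayed equation is the profile equation $\frac{x\cdot\mathbf{n}}{4}=-\partial_s^2 k$ for the graph $\Gamma_*=\{(x_1,\phi(x_1))\}$ with upward normal $\mathbf{n}=(-\phi',1)/v$, curvature $k$ and arc-length derivative $\partial_s=v^{-1}\partial_{x_1}$, so that $t^{1/4}\Gamma_*$ solves the surface diffusion flow $V=-\partial_s^2 k$. *)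

(* Defs.v *)
From HB Require Import structures.
From mathcomp Require Import all_boot all_order all_algebra.
From mathcomp Require Import all_classical all_reals all_analysis.
Set Implicit Arguments. Unset Strict Implicit. Unset Printing Implicit Defensive.
Import Order.TTheory GRing.Theory Num.Theory.
Import numFieldNormedType.Exports.
Local Open Scope ring_scope.
Local Open Scope classical_set_scope.

Definition C4 {R : realType} (f : R -> R) : Prop :=
  (forall k : nat, (k < 4)%N -> forall x : R, derivable (derive1n k f) x 1) /\
  continuous (derive1n 4 f).

Definition vfun {R : realType} (phi : R -> R) (x : R) : R :=
  Num.sqrt (1 + (derive1 phi x) ^+ 2).

Definition kfun {R : realType} (phi : R -> R) (x : R) : R :=
  (derive1n 2 phi x) / (vfun phi x) ^+ 3.

Definition sdf_profile {R : realType} (phi : R -> R) : Prop :=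
  forall x : R,
    (phi x - x * derive1 phi x) / (4 * vfun phi x)
    = - (1 / vfun phi x) *
        derive1 (fun y => (1 / vfun phi y) * derive1 (kfun phi) y) x.

Definition globally_lipschitz {R : realType} (f : R -> R) : Prop :=
  exists L : R, forall x y : R, `|f x - f y| <= L * `|x - y|.

(* Main.v *)
Require Import Defs.
From HB Require Import structures.
From mathcomp Require Import all_boot all_order all_algebra.
From mathcomp Require Import all_classical all_reals all_analysis.
From mathcomp Require Import ring lra.
Import Order.TTheory GRing.Theory Num.Theory.
Import numFieldNormedType.Exports.
Local Open Scope ring_scope.
Local Open Scope classical_set_scope.

Section H.
Context {R : realType}.
Implicit Types (f g : R -> R) (x df dg : R).

Lemma isdM f g x df dg : is_derive x 1 f df -> is_derive x 1 g dg ->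
  is_derive x 1 (fun y => f y * g y) (f x * dg + g x * df).
Proof. move=> hf hg; exact: (is_deriveM hf hg). Qed.
Arguments isdM {f g x df dg}.

Lemma isdD f g x df dg : is_derive x 1 f df -> is_derive x 1 g dg ->
  is_derive x 1 (fun y => f y + g y) (df + dg).
Proof. move=> hf hg; exact: (is_deriveD hf hg). Qed.
Arguments isdD {f g x df dg}.

Lemma isdB f g x df dg : is_derive x 1 f df -> is_derive x 1 g dg ->
  is_derive x 1 (fun y => f y - g y) (df - dg).
Proof. move=> hf hg; exact: (is_deriveB hf hg). Qed.
Arguments isdB {f g x df dg}.

Lemma isdV f x df : f x != 0 -> is_derive x 1 f df ->
  is_derive x 1 (fun y => (f y)^-1) (- (f x) ^- 2 * df).
Proof. move=> h hf; exact: (is_deriveV h hf). Qed.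
Arguments isdV {f x df}.

Lemma isdE f x df df' : is_derive x 1 f df' -> df' = df -> is_derive x 1 f df.
Proof. by move=> ? <-. Qed.
Arguments isdE {f x df df'}.

Lemma isdC (c : R) x : is_derive x 1 (fun _ => c) 0.
Proof. exact: is_derive_cst. Qed.
Arguments isdC c {x}.

Lemma isdX f x df n : is_derive x 1 f df ->
  is_derive x 1 (fun y => f y ^+ n) (n%:R * f x ^+ n.-1 * df).
Proof.
move=> hf; elim: n => [|n IH].
  by rewrite mul0r mul0r; exact: (isdC 1).
have -> : (fun y => f y ^+ n.+1) = (fun y => f y * f y ^+ n).
  by apply/funext => y; rewrite exprS.
eapply isdE; first exact: (isdM hf IH).
case: n {IH} => [|n] /=; first by rewrite !expr0 mul0r mul0r mulr0 add0r !mul1r.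
by rewrite exprS; rewrite -[(n.+2)%:R]natr1 -[(n.+1)%:R]natr1; ring.
Qed.
Arguments isdX {f x df} n.

Lemma isdI x : is_derive x 1 (fun y => y) 1.
Proof. exact: is_derive_id. Qed.
Arguments isdI {x}.

Lemma isdcomp f g x df dg : is_derive x 1 f df -> is_derive (f x) 1 g dg ->
  is_derive x 1 (fun y => g (f y)) (dg * df).
Proof.
move=> hf hg.
have df1 : derivable f x 1 by case: hf.
have dg1 : derivable g (f x) 1 by case: hg.
apply: DeriveDef.
  apply/derivable1_diffP; apply: (@differentiable_comp _ _ _ _ f g).
  - exact/derivable1_diffP.
  - exact/derivable1_diffP.
have := derive1_comp df1 dg1.
rewrite !derive1E => ->.
by rewrite !derive_val.
Qed.
Arguments isdcomp {f g x df dg}.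

Lemma isdsqrt f x df : 0 < f x -> is_derive x 1 f df ->
  is_derive x 1 (fun y => Num.sqrt (f y)) ((2 * Num.sqrt (f x))^-1 * df).
Proof.
move=> h hf; exact: (@isdcomp f Num.sqrt x df _ hf (is_derive1_sqrt h)).
Qed.
Arguments isdsqrt {f x df}.

Lemma der_of f x : derivable f x 1 -> is_derive x 1 f (derive1 f x).
Proof. by move=> h; rewrite derive1E; exact: derivableP. Qed.
Arguments der_of {f x}.

Lemma isd_val f x df : is_derive x 1 f df -> derive1 f x = df.
Proof. by move=> h; rewrite derive1E derive_val. Qed.
Arguments isd_val {f x df}.

Lemma dvM f g x : derivable f x 1 -> derivable g x 1 ->
  derivable (fun y => f y * g y) x 1.
Proof. move=> hf hg; exact: (derivableM hf hg). Qed.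
Arguments dvM {f g x}.
Lemma dvD f g x : derivable f x 1 -> derivable g x 1 ->
  derivable (fun y => f y + g y) x 1.
Proof. move=> hf hg; exact: (derivableD hf hg). Qed.
Arguments dvD {f g x}.
Lemma dvB f g x : derivable f x 1 -> derivable g x 1 ->
  derivable (fun y => f y - g y) x 1.
Proof. move=> hf hg; exact: (derivableB hf hg). Qed.
Arguments dvB {f g x}.
Lemma dvV f x : f x != 0 -> derivable f x 1 ->
  derivable (fun y => (f y)^-1) x 1.
Proof. move=> h hf; exact: (derivableV h hf). Qed.
Arguments dvV {f x}.
Lemma dvX f x n : derivable f x 1 -> derivable (fun y => f y ^+ n) x 1.
Proof. by move=> hf; case: (isdX n (der_of hf)). Qed.
Arguments dvX {f x} n.
Lemma dvC (c : R) x : derivable (fun _ => c) x 1.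
Proof. exact: derivable_cst. Qed.
Arguments dvC c {x}.

Lemma mono_ge0 f (df : R -> R) a b : (forall x, is_derive x 1 f (df x)) ->
  a <= b -> (forall x, a <= x -> x <= b -> 0 <= df x) -> f a <= f b.
Proof.
move=> hd ab hpos; rewrite -subr_ge0.
have [c cab ->] : exists2 c, c \in `[a, b]%R & f b - f a = df c * (b - a).
  apply: MVT_segment => //.
  apply: derivable_within_continuous => y _; by case: (hd y).
move: cab; rewrite in_itv /= => /andP[ac cb].
by apply: mulr_ge0; [exact: hpos|rewrite subr_ge0].
Qed.

Lemma mono_le0 f (df : R -> R) a b : (forall x, is_derive x 1 f (df x)) ->
  a <= b -> (forall x, a <= x -> x <= b -> df x <= 0) -> f b <= f a.
Proof.
move=> hd ab hneg.
have h := @mono_ge0 (fun y => 0 - f y) (fun y => 0 - df y) a b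
  (fun x => isdB (isdC 0) (hd x)) ab.
rewrite /= !sub0r lerN2 in h; apply: h => x ax xb.
by rewrite sub0r oppr_ge0; exact: hneg.
Qed.

Lemma deriv_le f x (M : R) : derivable f x 1 ->
  (\forall h \near (0 : R)^', h^-1 * (f (h + x) - f x) <= M) ->
  derive1 f x <= M.
Proof.
move=> hd hn; rewrite derive1E /derive.
apply: limr_le; first exact: hd.
near=> h; have -> : h *: (1:R) = h by rewrite -[h *: 1]/(h * 1) mulr1.
near: h; exact: hn.
Unshelve. all: by end_near. Qed.

Lemma deriv_ge f x (M : R) : derivable f x 1 ->
  (\forall h \near (0 : R)^', M <= h^-1 * (f (h + x) - f x)) ->
  M <= derive1 f x.
Proof.
move=> hd hn; rewrite derive1E /derive.
apply: limr_ge; first exact: hd.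
near=> h; have -> : h *: (1:R) = h by rewrite -[h *: 1]/(h * 1) mulr1.
near: h; exact: hn.
Unshelve. all: by end_near. Qed.


End H.
Arguments isdM {R} {f g x df dg}.
Arguments isdD {R} {f g x df dg}.
Arguments isdB {R} {f g x df dg}.
Arguments isdV {R} {f x df}.
Arguments isdE {R} {f x df df'}.
Arguments isdC {R} c {x}.
Arguments isdX {R} {f x df} n.
Arguments isdI {R} {x}.
Arguments isdcomp {R} {f g x df dg}.
Arguments isdsqrt {R} {f x df}.
Arguments der_of {R} {f x}.
Arguments isd_val {R} {f x df}.
Arguments dvM {R} {f g x}.
Arguments dvD {R} {f g x}.
Arguments dvB {R} {f g x}.
Arguments dvV {R} {f x}.
Arguments dvX {R} {f x} n.
Arguments dvC {R} c {x}.



Section Main.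
Context {R : realType}.
Variables (phi : R -> R) (a0 : R).
Hypothesis hC4 : C4 phi.
Hypothesis hsdf : sdf_profile phi.

Local Notation p := (derive1 phi).
Local Notation p2 := (derive1 (derive1 phi)).
Local Notation p3 := (derive1 (derive1 (derive1 phi))).
Local Notation v := (vfun phi).
Local Notation k := (kfun phi).

Lemma dphi (x : R) : is_derive x 1 phi (p x).
Proof. exact: der_of (hC4.1 0%N isT x). Qed.
Lemma dp (x : R) : is_derive x 1 p (p2 x).
Proof. exact: der_of (hC4.1 1%N isT x). Qed.
Lemma dp2 (x : R) : is_derive x 1 p2 (p3 x).
Proof. exact: der_of (hC4.1 2%N isT x). Qed.
Lemma dp3 (x : R) : derivable p3 x 1.
Proof. exact: (hC4.1 3%N isT x). Qed.

Lemma v_ge1 (x : R) : 1 <= v x.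
Proof.
rewrite /vfun -[X in X <= _]sqrtr1.
rewrite ler_sqrt; first by rewrite lerDl sqr_ge0.
by rewrite addr_ge0 ?sqr_ge0.
Qed.
Lemma v_gt0 (x : R) : 0 < v x.
Proof. exact: lt_le_trans ltr01 (v_ge1 x). Qed.
Lemma v_neq0 (x : R) : v x != 0.
Proof. by rewrite gt_eqF // v_gt0. Qed.
Lemma v_sq (x : R) : v x ^+ 2 = 1 + p x ^+ 2.
Proof. by rewrite /vfun sqr_sqrtr // addr_ge0 // sqr_ge0. Qed.

Lemma dv (x : R) : is_derive x 1 v (p x * p2 x / v x).
Proof.
have h1 : 0 < 1 + p x ^+ 2 by rewrite ltr_pwDl // sqr_ge0.
have := @isdsqrt _ (fun y => 1 + p y ^+ 2) _ _ h1 (isdD (isdC 1) (isdX 2 (dp x))).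
move=> h; apply: isdE h _.
rewrite -/(vfun phi x).
have := v_neq0 x; set V := v x; set A := p x; set B := p2 x => hv.
by field.
Qed.

Definition kd x := p3 x / v x ^+ 3 - 3%:R * p x * p2 x ^+ 2 / v x ^+ 5.

Lemma dk (x : R) : is_derive x 1 k (kd x).
Proof.
have h := isdM (dp2 x) (@isdV _ (fun y => v y ^+ 3) x _ (expf_neq0 3 (v_neq0 x)) (isdX 3 (dv x))).
rewrite /kfun; apply: isdE h _.
rewrite /kd /=.
have := v_neq0 x; set V := v x; set A := p x; set B := p2 x; set C := p3 x => hv.
by field.
Qed.

Lemma derk : derive1 k = kd.
Proof. by apply/funext => x; apply: isd_val; exact: dk. Qed.

Lemma dkd (x : R) : derivable kd x 1.
Proof.
have hv := v_neq0 x.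
have dv1 : derivable v x 1 by case: (dv x).
have dp1 : derivable p x 1 by case: (dp x).
have dp21 : derivable p2 x 1 by case: (dp2 x).
have i3 : derivable (fun y => (v y ^+ 3)^-1) x 1.
  exact: (@dvV _ (fun y => v y ^+ 3) x (expf_neq0 3 hv) (dvX 3 dv1)).
have i5 : derivable (fun y => (v y ^+ 5)^-1) x 1.
  exact: (@dvV _ (fun y => v y ^+ 5) x (expf_neq0 5 hv) (dvX 5 dv1)).
have t1 : derivable (fun y => p3 y / v y ^+ 3) x 1.
  exact: (@dvM _ p3 (fun y => (v y ^+ 3)^-1) x (dp3 x) i3).
have t2 : derivable (fun y => 3%:R * p y) x 1.
  exact: (@dvM _ (fun _ => 3%:R) p x (dvC _) dp1).
have t3 : derivable (fun y => 3%:R * p y * p2 y ^+ 2) x 1.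
  exact: (@dvM _ (fun y => 3%:R * p y) (fun y => p2 y ^+ 2) x t2 (dvX 2 dp21)).
have t4 : derivable (fun y => 3%:R * p y * p2 y ^+ 2 / v y ^+ 5) x 1.
  exact: (@dvM _ (fun y => 3%:R * p y * p2 y ^+ 2) (fun y => (v y ^+ 5)^-1) x t3 i5).
exact: (@dvB _ (fun y => p3 y / v y ^+ 3) (fun y => 3%:R * p y * p2 y ^+ 2 / v y ^+ 5) x t1 t4).
Qed.

Definition Wf := fun y => 1 / v y * derive1 k y.

Lemma dW (x : R) : is_derive x 1 Wf (- (phi x - x * p x) / 4%:R).
Proof.
have dWf : derivable Wf x 1.
  rewrite /Wf derk.
  have i1 : derivable (fun y => (v y)^-1) x 1.
    have dv1 : derivable v x 1 by case: (dv x).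
    exact: (@dvV _ v x (v_neq0 x) dv1).
  have i2 : derivable (fun y => 1 / v y) x 1.
    exact: (@dvM _ (fun _ => 1) (fun y => (v y)^-1) x (dvC _) i1).
  exact: (@dvM _ (fun y => 1 / v y) kd x i2 (dkd x)).
have h := der_of dWf.
apply: isdE h _.
have := hsdf x; rewrite -/Wf => e.
move: e (v_neq0 x).
set d := derive1 Wf x; set V := v x; set A := p x; set F := phi x => e hv.
have -> : d = - V * (- (1 / V) * d) by field.
by rewrite -e; field.
Qed.

Lemma kW (x : R) : derive1 k x = v x * Wf x.
Proof.
rewrite /Wf; have := v_neq0 x; set V := v x; set d := derive1 k x => hv.
by field.
Qed.

End Main.



Section Alg.
Context {R : realType}.

Lemma sq1_gt0 (q : R) : 0 < 1 + q ^+ 2.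
Proof. by rewrite ltr_pwDl // sqr_ge0. Qed.

Lemma sqV (q : R) : Num.sqrt (1 + q ^+ 2) ^+ 2 = 1 + q ^+ 2.
Proof. by rewrite sqr_sqrtr // ltW // sq1_gt0. Qed.

Lemma sqV_ge1 (q : R) : 1 <= Num.sqrt (1 + q ^+ 2).
Proof.
rewrite -[X in X <= _]sqrtr1 ler_sqrt; first by rewrite lerDl sqr_ge0.
by rewrite ltW // sq1_gt0.
Qed.

Lemma VV0_ge (q a : R) :
  1 + a * q <= Num.sqrt (1 + q ^+ 2) * Num.sqrt (1 + a ^+ 2).
Proof.
rewrite -sqrtrM; last by rewrite ltW // sq1_gt0.
apply: (le_trans (ler_norm _)).
rewrite -sqrtr_sqr ler_sqrt; last by rewrite mulr_ge0 // ltW // sq1_gt0.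
have := sqr_ge0 (q - a); nra.
Qed.

Lemma VV0_eq (q a : R) :
  1 + a * q = Num.sqrt (1 + q ^+ 2) * Num.sqrt (1 + a ^+ 2) -> q = a.
Proof.
move=> e.
have e2 : (1 + a * q) ^+ 2 = (1 + q ^+ 2) * (1 + a ^+ 2).
  by rewrite e exprMn !sqV.
have : (q - a) ^+ 2 = 0 by nra.
by move/eqP; rewrite sqrf_eq0 subr_eq0 => /eqP.
Qed.

Lemma V_lip (q a : R) :
  `|Num.sqrt (1 + q ^+ 2) - Num.sqrt (1 + a ^+ 2)| <= `|q - a|.
Proof.
set V := Num.sqrt (1 + q ^+ 2); set V0 := Num.sqrt (1 + a ^+ 2).
have hV : V ^+ 2 = 1 + q ^+ 2 by rewrite /V sqV.
have hV0 : V0 ^+ 2 = 1 + a ^+ 2 by rewrite /V0 sqV.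
have g1 : 1 <= V by exact: sqV_ge1.
have g2 : 1 <= V0 by exact: sqV_ge1.
have hvv := VV0_ge q a; rewrite -/V -/V0 in hvv.
have hsq : (V - V0) ^+ 2 <= (q - a) ^+ 2 by nra.
have hN : `|q - a| ^+ 2 = (q - a) ^+ 2 by rewrite real_normK // num_real.
have hN0 : 0 <= `|q - a| by [].
rewrite ler_norml; apply/andP; split; nra.
Qed.

End Alg.



Section P.
Context {R : realType}.
Variables (phi : R -> R) (a0 : R).
Hypothesis hC4 : C4 phi.
Hypothesis hsdf : sdf_profile phi.

Local Notation p := (derive1 phi).
Local Notation p2 := (derive1 (derive1 phi)).
Local Notation v := (vfun phi).
Local Notation k := (kfun phi).
Local Notation W := (Wf phi).

Definition v0 := Num.sqrt (1 + a0 ^+ 2).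
Definition ef (x : R) := v x - (1 + a0 * p x) / v0.
Definition Pf (x : R) := (x + phi x * p x) / v x - x / v0 - a0 / v0 * phi x
  + 4%:R * (k x * W x).

Lemma v0_ge1 : 1 <= v0. Proof. exact: sqV_ge1. Qed.
Lemma v0_neq0 : v0 != 0. Proof. by rewrite gt_eqF // (lt_le_trans ltr01 v0_ge1). Qed.
Lemma v0_sq : v0 ^+ 2 = 1 + a0 ^+ 2. Proof. exact: sqV. Qed.

Lemma ef_ge0 (x : R) : 0 <= ef x.
Proof.
rewrite /ef subr_ge0 ler_pdivrMr ?(lt_le_trans ltr01 v0_ge1) //.
exact: VV0_ge.
Qed.

Lemma ef_eq0 (x : R) : ef x = 0 -> p x = a0.
Proof.
move=> e; apply: VV0_eq; apply/esym.
move: e; rewrite /ef /v0 /vfun => /eqP; rewrite subr_eq0 => /eqP ->.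
by rewrite divfK //; exact: v0_neq0.
Qed.

Lemma dP (x : R) : is_derive x 1 Pf (ef x + 4%:R * W x ^+ 2 * v x).
Proof.
have hQ := isdM (isdD (isdI (x:=x)) (isdM (dphi phi hC4 x) (dp phi hC4 x)))
  (@isdV _ v x _ (v_neq0 phi x) (dv phi hC4 x)).
have hL := isdM (isdI (x:=x)) (isdC v0^-1 (x:=x)).
have hA := isdM (isdC (a0 / v0) (x:=x)) (dphi phi hC4 x).
have hK := isdM (isdC 4%:R (x:=x)) (isdM (dk phi hC4 x) (dW phi hC4 hsdf x)).
have h := isdD (isdB (isdB hQ hL) hA) hK.
rewrite /Pf; apply: isdE h _.
have kdE : kd phi x = v x * W x by rewrite -(derk phi hC4) kW.
rewrite kdE /kfun /ef.
change (derive1n 2 phi x) with (p2 x).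
have hvs := v_sq phi x.
have hv := v_neq0 phi x.
have hv0 := v0_neq0.
move: hvs hv hv0.
set V := v x; set A := p x; set B := p2 x; set F := phi x; set Wx := W x; set V0 := v0.
move=> hvs hv hv0.
apply/eqP; rewrite -subr_eq0; apply/eqP.
transitivity ((V ^+ 2 - (1 + A ^+ 2)) * ((F * B - V ^+ 2) / V ^+ 3)).
  by field; rewrite hv hv0.
have -> : V ^+ 2 - (1 + A ^+ 2) = 0.
  by apply/eqP; rewrite subr_eq0; apply/eqP; exact: hvs.
by rewrite mul0r.
Qed.

Lemma keyid (x : R) : 2%:R * k x * (v x * W x) =
  v x * Pf x / 2%:R + x * v0 * ef x / 2%:R
  - (phi x - a0 * x) * (p x - a0 * v x / v0) / 2%:R.
Proof.
rewrite /Pf /ef /kfun.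
change (derive1n 2 phi x) with (p2 x).
have hv := v_neq0 phi x.
have hv0 := v0_neq0.
have hv0s := v0_sq.
move: hv hv0 hv0s.
set V := v x; set A := p x; set B := p2 x; set F := phi x; set Wx := W x; set V0 := v0.
move=> hv hv0 hv0s.
apply/eqP; rewrite -subr_eq0; apply/eqP.
transitivity ((V0 ^+ 2 - (1 + a0 ^+ 2)) * (- (x * V) / (2%:R * V0))).
  by field; rewrite hv0.
have -> : V0 ^+ 2 - (1 + a0 ^+ 2) = 0.
  by apply/eqP; rewrite subr_eq0; apply/eqP; exact: hv0s.
by rewrite mul0r.
Qed.

Lemma K2_bound (x : R) : `|p x - a0 * v x / v0| <= (1 + `|a0|) * `|p x - a0|.
Proof.
have hv0 := v0_neq0.
have e : p x - a0 * v x / v0 = (p x - a0) + a0 * (v0 - v x) / v0.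
  by field.
rewrite e (le_trans (ler_normD _ _)) // mulrDl mul1r lerD2l.
rewrite !normrM normfV (ger0_norm (le_trans ler01 v0_ge1)).
rewrite -mulrA ler_wpM2l //.
rewrite ler_pdivrMr ?(lt_le_trans ltr01 v0_ge1) //.
apply: (le_trans _ (ler_peMr _ v0_ge1)) => //.
by rewrite distrC; exact: V_lip.
Qed.

End P.



Section Fsec.
Context {R : realType}.
Variables (phi : R -> R) (a0 : R).
Hypothesis hC4 : C4 phi.
Hypothesis hint : (@lebesgue_measure R).-integrable setT
  (fun x : R => (derive1 phi x - a0)%:E).

Local Notation p := (derive1 phi).
Local Notation mu := (@lebesgue_measure R).

Definition f0 (t : R) := `|p t - a0|.
Definition Fi (x : R) :=
  (\int[mu]_(t in [set` Interval -oo%O (BRight x)]) f0 t)%R.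

Lemma intf0 : mu.-integrable setT (EFin \o f0).
Proof. exact: (integrable_norm hint). Qed.

Lemma dF (x : R) : is_derive x 1 Fi (f0 x).
Proof.
have hi : mu.-integrable [set` Interval -oo%O (BRight (x + 1))] (EFin \o f0).
  by apply: integrableS intf0 => //; exact: measurable_itv.
have cf : {for x, continuous f0}.
  have dpx : derivable p x 1 by case: (dp phi hC4 x).
  have cp : {for x, continuous p}.
    exact: differentiable_continuous ((derivable1_diffP _ _).1 dpx).
  apply: (@continuous_comp _ _ _ (fun t => p t - a0) Num.norm).
    by apply: cvgB => //; exact: cvg_cst.
  exact: norm_continuous.
have ltx : x < x + 1 by rewrite ltrDl.
have ha : (-oo%O < BRight x)%E by exact: ltNyr.
have [h1 h2] := @continuous_FTC1 R f0 -oo%O x (x + 1) ltx hi ha cf.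
by apply: DeriveDef => //; rewrite -derive1E.
Qed.

Lemma F_ge0 (x : R) : 0 <= Fi x.
Proof. by apply: Rintegral_ge0 => t _; exact: normr_ge0. Qed.

Lemma F_bound : exists I : R, forall x, Fi x <= I.
Proof.
exists (fine (\int[mu]_(t in setT) (f0 t)%:E)) => x.
rewrite /Fi /Rintegral.
have m1 : measurable [set` Interval -oo%O (BRight x)] by exact: measurable_itv.
have i1 : (\int[mu]_(t in [set` Interval -oo%O (BRight x)]) (f0 t)%:E)%E \is a fin_num.
  by apply: integrable_fin_num => //; apply: integrableS intf0.
have i2 : (\int[mu]_(t in setT) (f0 t)%:E)%E \is a fin_num.
  exact: integrable_fin_num intf0.
have le : (\int[mu]_(t in [set` Interval -oo%O (BRight x)]) (f0 t)%:E <=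
           \int[mu]_(t in setT) (f0 t)%:E)%E.
  apply: ge0_subset_integral => //.
    exact: measurable_int intf0.
  by move=> t _; rewrite lee_fin normr_ge0.
exact: fine_le i1 i2 le.
Qed.

End Fsec.



Section Fin.
Context {R : realType}.
Variables (phi : R -> R) (a0 : R).
Hypothesis hC4 : C4 phi.
Hypothesis hsdf : sdf_profile phi.
Hypothesis hlip : globally_lipschitz phi.
Hypothesis hint : (@lebesgue_measure R).-integrable setT
  (fun x : R => (derive1 phi x - a0)%:E).

Local Notation p := (derive1 phi).
Local Notation p2 := (derive1 (derive1 phi)).
Local Notation v := (vfun phi).
Local Notation k := (kfun phi).
Local Notation W := (Wf phi).
Local Notation P := (Pf phi a0).
Local Notation e := (ef phi a0).
Local Notation F := (Fi phi a0).
Local Notation V0 := (v0 a0).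

Lemma p_bound : exists L : R, forall x, `|p x| <= L.
Proof.
have [L hL] := hlip; exists L => x.
have dpx : derivable phi x 1 by case: (dphi phi hC4 x).
have hq : forall h : R, h != 0 -> `|h^-1 * (phi (h + x) - phi x)| <= L.
  move=> h hn; rewrite normrM normfV mulrC ler_pdivrMr ?normr_gt0 //.
  by have := hL (h + x) x; rewrite addrK.
have hn := nbhs_dnbhs_neq (0 : R).
rewrite ler_norml; apply/andP; split.
  apply: deriv_ge => //; apply: filterS hn => h /hq.
  by rewrite ler_norml => /andP[].
apply: deriv_le => //; apply: filterS hn => h /hq.
by rewrite ler_norml => /andP[].
Qed.

Lemma final_contra (L : R) : (forall x, `|p x| <= L) ->
  forall Y, (forall y, Y <= y -> y <= Y + (2%:R * L + 1) -> 1 <= `|p2 y|) -> False.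
Proof.
move=> hL Y hY.
have L0 : 0 <= L by exact: le_trans (normr_ge0 _) (hL 0).
have hlt : Y < Y + (2%:R * L + 1) by rewrite ltrDl; lra.
have dpy : forall y, derivable p y 1 by move=> y; case: (dp phi hC4 y).
have [c cab hc] := MVT hlt (fun x _ => dp phi hC4 x)
  (derivable_within_continuous (fun y _ => dpy y)).
move: cab; rewrite in_itv /= => /andP[c1 c2].
have h1 := hY c (ltW c1) (ltW c2).
have h2 : `|p (Y + (2%:R * L + 1)) - p Y| <= 2%:R * L.
  apply: (le_trans (ler_normB _ _)).
  by have := hL (Y + (2%:R * L + 1)); have := hL Y; lra.
move: h2; rewrite hc addrAC subrr add0r normrM.
rewrite (ger0_norm (_ : 0 <= 2%:R * L + 1)); last lra.
nra.
Qed.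

Lemma p2_of_k y : 1 <= k y ^+ 2 -> 1 <= `|p2 y|.
Proof.
move=> hk.
have hv := v_ge1 phi y.
have e1 : p2 y = k y * v y ^+ 3.
  rewrite /kfun; change (derive1n 2 phi y) with (p2 y).
  by rewrite divfK // expf_neq0 // v_neq0.
have hkn : 1 <= `|k y|.
  have := real_normK (num_real (k y)); have := normr_ge0 (k y); nra.
rewrite e1 normrM (ger0_norm (_ : 0 <= v y ^+ 3)); last by rewrite exprn_ge0 // (le_trans ler01 hv).
have : 1 <= v y ^+ 3 by rewrite exprn_ege1.
nra.
Qed.

Lemma Pmono a b : a <= b -> P a <= P b.
Proof.
move=> ab; apply: (@mono_ge0 _ P (fun x => e x + 4%:R * W x ^+ 2 * v x) a b
  (dP phi a0 hC4 hsdf) ab) => x _ _.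
apply: addr_ge0; first exact: ef_ge0.
have := v_ge1 phi x; have := sqr_ge0 (W x); nra.
Qed.

Lemma dpsi (x : R) : is_derive x 1 (fun y => phi y - a0 * y) (p x - a0).
Proof.
apply: isdE (isdB (dphi phi hC4 x) (isdM (isdC a0) (isdI (x:=x)))) _.
by rewrite mulr1 mulr0 addr0.
Qed.

Lemma dk2 (x : R) : is_derive x 1 (fun y => k y ^+ 2) (2%:R * k x * (v x * W x)).
Proof.
apply: isdE (isdX 2 (dk phi hC4 x)) _.
by rewrite -(derk phi hC4) kW /= expr1.
Qed.

End Fin.



Section Fin2.
Context {R : realType}.
Variables (phi : R -> R) (a0 : R).
Hypothesis hC4 : C4 phi.
Hypothesis hsdf : sdf_profile phi.
Hypothesis hlip : globally_lipschitz phi.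
Hypothesis hint : (@lebesgue_measure R).-integrable setT
  (fun x : R => (derive1 phi x - a0)%:E).

Local Notation p := (derive1 phi).
Local Notation p2 := (derive1 (derive1 phi)).
Local Notation v := (vfun phi).
Local Notation k := (kfun phi).
Local Notation W := (Wf phi).
Local Notation P := (Pf phi a0).
Local Notation e := (ef phi a0).
Local Notation F := (Fi phi a0).
Local Notation V0 := (v0 a0).

Lemma right_case (c b1 : R) : 0 < c -> (forall x, b1 <= x -> c <= P x) -> False.
Proof.
move=> c0 hP.
have [L hL] := p_bound phi hC4 hlip.
have [I hI] := F_bound phi a0 hint.
have I0 : 0 <= I := le_trans (F_ge0 phi a0 0) (hI 0).
pose b := b1 + `|b1|.
have n1 : - b1 <= `|b1| by rewrite -normrN ler_norm.
have hb1 : b1 <= b by rewrite /b lerDl.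
have hb0 : 0 <= b by rewrite /b; lra.
pose psi := fun y => phi y - a0 * y.
pose M := `|psi b| + I.
have M0 : 0 <= M by rewrite /M addr_ge0.
have hpsi : forall x, b <= x -> `|psi x| <= M.
  move=> x bx.
  have u1 := @mono_ge0 _ _ _ b x (fun y => isdB (dF phi a0 hC4 hint y) (dpsi phi a0 hC4 y)) bx.
  have u2 := @mono_ge0 _ _ _ b x (fun y => isdD (dF phi a0 hC4 hint y) (dpsi phi a0 hC4 y)) bx.
  have {}u1 : F b - psi b <= F x - psi x.
    by apply: u1 => y _ _; rewrite /f0 subr_ge0 ler_norm.
  have {}u2 : F b + psi b <= F x + psi x.
    apply: u2 => y _ _; rewrite /f0.
    by have := ler_norm (- (p y - a0)); rewrite normrN; lra.
  have := F_ge0 phi a0 b; have := hI x.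
  have := ler_norm (psi b); have := ler_norm (- psi b); rewrite normrN.
  rewrite /M ler_norml => *; apply/andP; split; lra.
pose K2 := 1 + `|a0|.
have K20 : 0 <= K2 by rewrite /K2 addr_ge0.
have dG := fun y => isdD (isdB (dk2 phi hC4 y) (isdM (isdC (c / 2%:R)) (isdI (x:=y))))
  (isdM (isdC (M * K2 / 2%:R)) (dF phi a0 hC4 hint y)).
have hG : forall y, b <= y ->
    k b ^+ 2 - c / 2%:R * b + M * K2 / 2%:R * F b <=
    k y ^+ 2 - c / 2%:R * y + M * K2 / 2%:R * F y.
  move=> y by_; apply: (@mono_ge0 _ _ _ b y dG by_) => x bx _.
  rewrite /= mulr1 !mulr0 !addr0 (keyid phi a0 x).
  have hx0 : 0 <= x by lra.
  have hPx := hP x (le_trans hb1 bx).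
  have hv := v_ge1 phi x.
  have vP : c <= v x * P x by nra.
  have xe : 0 <= x * V0 * e x.
    by rewrite !mulr_ge0 // ?ef_ge0 // (le_trans ler01 (v0_ge1 a0)).
  have hq : psi x * (p x - a0 * v x / V0) <= M * K2 * f0 phi a0 x.
    apply: (le_trans (ler_norm _)); rewrite normrM -[M * K2 * _]mulrA.
    apply: ler_pM => //; first exact: (hpsi x bx).
    exact: K2_bound.
  rewrite -/(psi x); lra.
have hk : forall y, b + (M * K2 * I + 2%:R) / c <= y -> 1 <= k y ^+ 2.
  move=> y hy.
  have by_ : b <= y.
    apply: le_trans hy; rewrite lerDl divr_ge0 ?(ltW c0) //.
    by rewrite addr_ge0 // mulr_ge0 // mulr_ge0.
  have g := hG y by_.
  have hy2 : M * K2 * I + 2%:R <= (y - b) * c.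
    by rewrite -ler_pdivrMr // lerBrDl.
  have f1 := F_ge0 phi a0 b; have f2 := hI y.
  have mk0 : 0 <= M * K2 by rewrite mulr_ge0.
  have f3 : M * K2 * F y <= M * K2 * I by rewrite ler_wpM2l.
  have k0 : 0 <= k b ^+ 2 by rewrite sqr_ge0.
  have mk1 : 0 <= M * K2 * F b by rewrite mulr_ge0.
  lra.
apply: (final_contra phi hC4 L hL (b + (M * K2 * I + 2%:R) / c)) => y y1 _.
exact: p2_of_k (hk y y1).
Qed.


Lemma left_case (c a1 : R) : 0 < c -> (forall x, x <= a1 -> P x <= - c) -> False.
Proof.
move=> c0 hP.
have [L hL] := p_bound phi hC4 hlip.
have [I hI] := F_bound phi a0 hint.
have I0 : 0 <= I := le_trans (F_ge0 phi a0 0) (hI 0).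
pose a := a1 - `|a1|.
have n1 : a1 <= `|a1| by rewrite ler_norm.
have ha1 : a <= a1 by rewrite /a lerBlDr lerDl.
have ha0 : a <= 0 by rewrite /a; lra.
pose psi := fun y => phi y - a0 * y.
pose M := `|psi a| + I.
have M0 : 0 <= M by rewrite /M addr_ge0.
have hpsi : forall x, x <= a -> `|psi x| <= M.
  move=> x xa.
  have u1 := @mono_ge0 _ _ _ x a (fun y => isdB (dF phi a0 hC4 hint y) (dpsi phi a0 hC4 y)) xa.
  have u2 := @mono_ge0 _ _ _ x a (fun y => isdD (dF phi a0 hC4 hint y) (dpsi phi a0 hC4 y)) xa.
  have {}u1 : F x - psi x <= F a - psi a.
    by apply: u1 => y _ _; rewrite /f0 subr_ge0 ler_norm.
  have {}u2 : F x + psi x <= F a + psi a.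
    apply: u2 => y _ _; rewrite /f0.
    by have := ler_norm (- (p y - a0)); rewrite normrN; lra.
  have := F_ge0 phi a0 x; have := hI a.
  have := ler_norm (psi a); have := ler_norm (- psi a); rewrite normrN.
  rewrite /M ler_norml => *; apply/andP; split; lra.
pose K2 := 1 + `|a0|.
have K20 : 0 <= K2 by rewrite /K2 addr_ge0.
have dG := fun y => isdB (isdD (dk2 phi hC4 y) (isdM (isdC (c / 2%:R)) (isdI (x:=y))))
  (isdM (isdC (M * K2 / 2%:R)) (dF phi a0 hC4 hint y)).
have hG : forall y, y <= a ->
    k a ^+ 2 + c / 2%:R * a - M * K2 / 2%:R * F a <=
    k y ^+ 2 + c / 2%:R * y - M * K2 / 2%:R * F y.
  move=> y ya; apply: (@mono_le0 _ _ _ y a dG ya) => x _ xa.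
  rewrite /= mulr1 !mulr0 !addr0 (keyid phi a0 x).
  have hx0 : x <= 0 by lra.
  have hPx := hP x (le_trans xa ha1).
  have hv := v_ge1 phi x.
  have vP : v x * P x <= - c by nra.
  have xe : x * V0 * e x <= 0.
    rewrite -mulrA mulr_le0_ge0 // mulr_ge0 // ?ef_ge0 //.
    exact: le_trans ler01 (v0_ge1 a0).
  have hq : - (psi x * (p x - a0 * v x / V0)) <= M * K2 * f0 phi a0 x.
    apply: (le_trans (ler_norm _)); rewrite normrN normrM -[M * K2 * _]mulrA.
    apply: ler_pM => //; first exact: (hpsi x xa).
    exact: K2_bound.
  rewrite -/(psi x); lra.
have hk : forall y, y <= a - (M * K2 * I + 2%:R) / c -> 1 <= k y ^+ 2.
  move=> y hy.
  have hpos : 0 <= (M * K2 * I + 2%:R) / c.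
    by rewrite divr_ge0 ?(ltW c0) // addr_ge0 // mulr_ge0 // mulr_ge0.
  have ya : y <= a by lra.
  have g := hG y ya.
  have hy2 : M * K2 * I + 2%:R <= (a - y) * c.
    by rewrite -ler_pdivrMr //; lra.
  have f1 := F_ge0 phi a0 y; have f2 := hI a.
  have mk0 : 0 <= M * K2 by rewrite mulr_ge0.
  have f3 : M * K2 * F a <= M * K2 * I by rewrite ler_wpM2l.
  have k0 : 0 <= k a ^+ 2 by rewrite sqr_ge0.
  have mk1 : 0 <= M * K2 * F y by rewrite mulr_ge0.
  lra.
have L0 : 0 <= L by exact: le_trans (normr_ge0 _) (hL 0).
apply: (final_contra phi hC4 L hL (a - (M * K2 * I + 2%:R) / c - (2%:R * L + 1))).
move=> y _ y2; apply: p2_of_k; apply: hk; lra.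
Qed.

End Fin2.



Lemma aux_pos {R : realType} (a b : R) : 0 < a -> 0 <= b -> a + b <= 0 -> False.
Proof. move=> *; lra. Qed.

Lemma aux_split {R : realType} (A B : R) : B < A ->
  (A - B) / 2%:R <= A \/ B <= - ((A - B) / 2%:R).
Proof. move=> h; case: (lerP ((A - B) / 2%:R) A) => h'; [left|right]; lra. Qed.

Lemma aux_c0 {R : realType} (A B : R) : B < A -> 0 < (A - B) / 2%:R.
Proof. move=> h; lra. Qed.

Lemma aux_l1 {R : realType} (h x0 : R) : - 1 < h -> x0 - 1 <= h + x0.
Proof. move=> *; lra. Qed.

Lemma aux_l2 {R : realType} (h x0 : R) : h < 1 -> h + x0 <= x0 + 1.
Proof. move=> *; lra. Qed.

Lemma caseA {R : realType} (phi : R -> R) (a0 : R) :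
  sdf_profile phi -> (forall x, ef phi a0 x = 0) -> forall x, phi x = a0 * x.
Proof.
move=> hsdf h.
have pa : forall x, derive1 phi x = a0 := fun x => ef_eq0 phi a0 x (h x).
have pE : derive1 phi = (fun _ => a0) by apply/funext.
have p2z : forall x, derive1 (derive1 phi) x = 0.
  by move=> x; rewrite pE; exact: derive1_cst.
have kz : kfun phi = (fun _ => 0).
  apply/funext => x; rewrite /kfun.
  by change (derive1n 2 phi x) with (derive1 (derive1 phi) x); rewrite p2z mul0r.
have Wz : Wf phi = (fun _ => 0).
  apply/funext => x; rewrite /Wf kz.
  by rewrite (derive1_cst (0 : R) x) mulr0.
move=> x.
have e := hsdf x.
change (derive1 (fun y => 1 / vfun phi y * derive1 (kfun phi) y) x)
  with (derive1 (Wf phi) x) in e.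
rewrite Wz (derive1_cst (0 : R) x) mulr0 pa in e.
have hv := v_neq0 phi x.
move: e hv; set V := vfun phi x => e hv.
have : phi x - x * a0 = ((phi x - x * a0) / (4%:R * V)) * (4%:R * V).
  by field; rewrite hv.
rewrite e mul0r => /eqP; rewrite subr_eq0 mulrC => /eqP.
by [].
Qed.

Theorem corollary3p4 (R : realType) (phi : R -> R) (a0 : R) :
  C4 phi ->
  sdf_profile phi ->
  globally_lipschitz phi ->
  (@lebesgue_measure R).-integrable setT (fun x : R => (derive1 phi x - a0)%:E) ->
  forall x1 : R, phi x1 = a0 * x1.
Proof.
move=> hC4 hsdf hlip hint.
case: (pselect (exists x0, 0 < ef phi a0 x0)) => [[x0 hx0]|hno]; last first.
  apply: caseA => // x; apply/eqP; rewrite eq_le ef_ge0 andbT leNgt.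
  by apply/negP => hx; apply: hno; exists x.
exfalso.
have Pm := Pmono phi a0 hC4 hsdf.
have h01 : x0 - 1 <= x0 by rewrite lerBlDr lerDl.
have h02 : x0 <= x0 + 1 by rewrite lerDl.
have hlt : Pf phi a0 (x0 - 1) < Pf phi a0 (x0 + 1).
  rewrite ltNge; apply/negP => hle.
  have const : forall y, x0 - 1 <= y -> y <= x0 + 1 ->
      Pf phi a0 y = Pf phi a0 x0.
    move=> y y1 y2.
    apply/eqP; rewrite eq_le; apply/andP; split.
      exact: le_trans (Pm _ _ y2) (le_trans hle (Pm _ _ h01)).
    exact: le_trans (Pm _ _ h02) (le_trans hle (Pm _ _ y1)).
  have dPx0 := dP phi a0 hC4 hsdf x0.
  have hd : derive1 (Pf phi a0) x0 <= 0.
    apply: deriv_le; first by case: dPx0.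
    near=> h.
    have hh : `|h| < 1 by near: h; exact: dnbhs0_lt.
    move: hh; rewrite ltr_norml => /andP[l1 l2].
    rewrite const; [by rewrite subrr mulr0| exact: aux_l1 | exact: aux_l2].
  rewrite (isd_val dPx0) in hd.
  have h4 : 0 <= 4%:R * Wf phi x0 ^+ 2 * vfun phi x0.
    apply: mulr_ge0; first by rewrite mulr_ge0 ?sqr_ge0.
    exact: le_trans ler01 (v_ge1 phi x0).
  exact: aux_pos _ _ hx0 h4 hd.
have [hc|hc] := aux_split _ _ hlt.
  apply: (right_case phi a0 hC4 hlip hint _ (x0 + 1) (aux_c0 _ _ hlt)) => x hx.
  exact: le_trans hc (Pm _ _ hx).
apply: (left_case phi a0 hC4 hlip hint _ (x0 - 1) (aux_c0 _ _ hlt)) => x hx.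
exact: le_trans (Pm _ _ hx) hc.
Unshelve. all: by end_near. Qed.
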